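(* Consider a round of the triadic majority rule process among participants $x,y,z$ (nodes of a median graph) in which the initial current winner is $x$, the initial proposer is $y$, and all three participants follow truthful bargaining. Then the round ends with winner $\hat w = m(x,y,z)$.
   Context: $G$ is a finite connected unweighted undirected median graph: with shortest-path distance $d$ and $I_{ab}=\{w:d(a,w)+d(w,b)=d(a,b)\}$, $\lvert I_{ab}\cap I_{ac}\cap I_{bc}\rvert=1$ for all $a,b,c$, and $m(a,b,c)$ is that node. Triadic majority rule round: there is a current winner and a proposer. In each step the proposer proposes a node $a$ or a motion to end; all three vote simultaneously to accept or reject. If an alternative is accepted by majority it becomes the current winner. If the vote is unanimous the proposer stays; otherwise the participant in the minority becomes proposer. If a motion to end is accepted by majority the round ends, its winner being the current winner. Truthful bargaining: with current winner $w$, the preferred points of $u$ are $P_u=I_{uw}\setminus\{w\}$, its bargaining points are $B_u=(P_u\cap P_{u'})\cup(P_u\cap P_{u''})$ ($u',u''$ the other two), a best bargaining point is a point of $B_u$ closest to $u$. The participant proposes a best bargaining point if $B_u\neq\emptyset$ and a motion to end otherwise; accepts an alternative $a$ iff $d(u,a)<d(u,w)$; accepts a motion to end iff $B_u=\emptyset$; ties broken arbitrarily. *)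

(* Defs.v *)
From mathcomp Require Import all_boot.
Set Implicit Arguments. Unset Strict Implicit. Unset Printing Implicit Defensive.

Fixpoint walkn (T : finType) (e : rel T) (n : nat) (x y : T) : bool :=
  if n is n'.+1 then [exists z, e x z && walkn e n' z y] else x == y.

(** Shortest-path distance: least [n] with a walk of length [n]
    (on a connected graph such an [n] is always < #|T|). *)
Definition gdist (T : finType) (e : rel T) (x y : T) : nat :=
  find (fun n => walkn e n x y) (iota 0 #|T|).

Definition interval (T : finType) (e : rel T) (a b : T) : {set T} :=
  [set w | gdist e a w + gdist e w b == gdist e a b].

(** m(a,b,c): the (unique, in a median graph) node of I_ab ∩ I_ac ∩ I_bc. *)
Definition median (T : finType) (e : rel T) (a b c : T) : T :=
  odflt a [pick w in interval e a b :&: interval e a c :&: interval e b c].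

Definition median_graph (T : finType) (e : rel T) : Prop :=
  [/\ symmetric e, irreflexive e, (forall x y, connect e x y) &
      forall a b c, #|interval e a b :&: interval e a c :&: interval e b c| = 1].

(** The three participants are indexed by ['I_3]; [loc u] is the node of [u]. *)

Definition loc3 (T : Type) (x y z : T) (u : 'I_3) : T := nth x [:: x; y; z] u.

Definition ag1 : 'I_3 := @Ordinal 3 1 isT.

Definition pref (T : finType) (e : rel T) (loc : 'I_3 -> T) (w : T) (u : 'I_3)
  : {set T} := interval e (loc u) w :\ w.

Definition barg (T : finType) (e : rel T) (loc : 'I_3 -> T) (w : T) (u : 'I_3)
  : {set T} := \bigcup_(v | v != u) (pref e loc w u :&: pref e loc w v).

Definition best_barg (T : finType) (e : rel T) (loc : 'I_3 -> T) (w : T)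
  (u : 'I_3) (a : T) : bool :=
  (a \in barg e loc w u) &&
  [forall b in barg e loc w u, gdist e (loc u) a <= gdist e (loc u) b].

Definition accept_alt (T : finType) (e : rel T) (loc : 'I_3 -> T) (w a : T)
  (u : 'I_3) : bool := gdist e (loc u) a < gdist e (loc u) w.

Definition accept_end (T : finType) (e : rel T) (loc : 'I_3 -> T) (w : T)
  (u : 'I_3) : bool := barg e loc w u == set0.

Definition majority (acc : 'I_3 -> bool) : bool := 2 <= #|[set u | acc u]|.

(** Unanimous vote: proposer stays; otherwise the participant in the minority
    becomes proposer. *)
Definition next_proposer (acc : 'I_3 -> bool) (p : 'I_3) : 'I_3 :=
  if [forall u, acc u == acc p] then p
  else odflt p [pick u | [forall v, (v != u) ==> (acc v != acc u)]].

(** State = (current winner, proposer).  [step s None] means the round ends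
    (with winner [s.1]); [step s (Some s')] is a transition to [s'].
    The only nondeterminism is the arbitrary choice among best bargaining
    points. *)
Inductive step (T : finType) (e : rel T) (loc : 'I_3 -> T)
  : T * 'I_3 -> option (T * 'I_3) -> Prop :=
| step_alt w p a :
    best_barg e loc w p a ->
    step e loc (w, p)
      (Some (if majority (accept_alt e loc w a) then a else w,
             next_proposer (accept_alt e loc w a) p))
| step_end_acc w p :
    barg e loc w p = set0 ->
    majority (accept_end e loc w) ->
    step e loc (w, p) None
| step_end_rej w p :
    barg e loc w p = set0 ->
    ~~ majority (accept_end e loc w) ->
    step e loc (w, p) (Some (w, next_proposer (accept_end e loc w) p)).

(** [round_ends_with e loc Q s]: from state [s], however ties are broken, the
    round ends after finitely many steps, and its winner satisfies [Q]. *)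
Inductive round_ends_with (T : finType) (e : rel T) (loc : 'I_3 -> T)
  (Q : T -> Prop) : T * 'I_3 -> Prop :=
| RE s :
    (exists o, step e loc s o) ->
    (step e loc s None -> Q s.1) ->
    (forall s', step e loc s (Some s') -> round_ends_with e loc Q s') ->
    round_ends_with e loc Q s.

(* Main.v *)
Require Import Defs.
From mathcomp Require Import all_boot zify.
Set Implicit Arguments. Unset Strict Implicit. Unset Printing Implicit Defensive.

Section Dist.
Variables (T : finType) (e : rel T).
Hypothesis esym : symmetric e.
Hypothesis conn : forall x y, connect e x y.
Local Notation d := (gdist e).

Lemma path_walkn x p : path e x p -> walkn e (size p) x (last x p).
Proof.
elim: p x => [|a p IH] x /=; first by rewrite eqxx.
case/andP=> exa pth; apply/existsP; exists a; by rewrite exa IH.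
Qed.

Lemma walk_ex x y : exists2 n, n < #|T| & walkn e n x y.
Proof.
have /connectP [p pth ->] := conn x y.
case/shortenP: pth => p' pth' uq _.
exists (size p'); last exact: path_walkn.
have := card_uniqP uq; rewrite /= => H.
have := max_card (mem (x :: p')); rewrite H /=; lia.
Qed.

Lemma gdist_walk x y : walkn e (d x y) x y.
Proof.
have [n lt Hn] := walk_ex x y.
have hs : has (fun n => walkn e n x y) (iota 0 #|T|).
  by apply/hasP; exists n => //; rewrite mem_iota.
have hf := has_find (fun n => walkn e n x y) (iota 0 #|T|).
rewrite hs size_iota in hf.
have := nth_find 0 hs; rewrite /gdist nth_iota ?add0n //; exact/esym/hf.
Qed.

Lemma gdist_min x y n : walkn e n x y -> d x y <= n.
Proof.
move=> Hn.
have [k lt Hk] := walk_ex x y.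
have hs : has (fun n => walkn e n x y) (iota 0 #|T|).
  by apply/hasP; exists k => //; rewrite mem_iota.
have lt2 : d x y < #|T|.
  have hf := has_find (fun n => walkn e n x y) (iota 0 #|T|).
  by rewrite hs size_iota in hf; rewrite /gdist -hf.
case: (leqP #|T| n) => [Hle|Hlt]; first lia.
rewrite leqNgt; apply/negP => Hlt2.
have := before_find 0 Hlt2; rewrite nth_iota ?add0n // ?Hn //.
Qed.

Lemma walkn_cat n k x y w : walkn e n x y -> walkn e k y w -> walkn e (n + k) x w.
Proof.
elim: n x => [|n IH] x /=; first by move/eqP->.
case/existsP=> v /andP[exv Hv] Hk; rewrite ?addSn /=.
apply/existsP; exists v; by rewrite exv (IH _ Hv Hk).
Qed.

Lemma walkn_sym n x y : walkn e n x y -> walkn e n y x.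
Proof.
elim: n x y => [|n IH] x y /=; first by rewrite eq_sym.
case/existsP=> v /andP[exv Hv].
have H1 : walkn e 1 v x by apply/existsP; exists x; rewrite /= esym exv eqxx.
by have := walkn_cat (IH _ _ Hv) H1; rewrite addn1.
Qed.

Lemma dsym x y : d x y = d y x.
Proof.
apply/anti_leq; rewrite !gdist_min //; exact/walkn_sym/gdist_walk.
Qed.

Lemma dtri x y w : d x w <= d x y + d y w.
Proof. apply: gdist_min; apply: walkn_cat; exact: gdist_walk. Qed.

Lemma dxx x : d x x = 0.
Proof. by apply/eqP; rewrite -leqn0; apply: gdist_min => /=. Qed.

Lemma d0 x y : d x y = 0 -> x = y.
Proof. move=> H; have := gdist_walk x y; rewrite H /=; by move/eqP. Qed.

Lemma inI a b w : (w \in interval e a b) = (d a w + d w b == d a b).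
Proof. by rewrite inE. Qed.

Lemma interval_sym a b w : (w \in interval e a b) = (w \in interval e b a).
Proof. by rewrite !inI (dsym a w) (dsym w b) (dsym a b) addnC. Qed.

Lemma interval_refl a w : (w \in interval e a a) = (w == a).
Proof.
rewrite inI dxx; apply/eqP/eqP => [H|->]; last by rewrite dxx.
apply: d0; rewrite dsym; lia.
Qed.

Lemma int_meet a b m w : m \in interval e a b -> w \in interval e a m ->
  w \in interval e b m -> w = m.
Proof.
rewrite !inI => /eqP H1 /eqP H2 /eqP H3.
have := dtri a w b; rewrite (dsym w b) => H4; rewrite (dsym m b) in H1.
apply: d0; lia.
Qed.

Hypothesis med : forall a b c,
  #|interval e a b :&: interval e a c :&: interval e b c| = 1.

Lemma median_in a b c : median e a b c \in
  interval e a b :&: interval e a c :&: interval e b c.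
Proof.
rewrite /median; case: pickP => [w Hw|H] //=.
have /card_gt0P [w Hw] : 0 < #|interval e a b :&: interval e a c :&: interval e b c|
  by rewrite med.
by rewrite H in Hw.
Qed.

Lemma median_uniq a b c w : w \in
  interval e a b :&: interval e a c :&: interval e b c -> w = median e a b c.
Proof.
have /eqP /cards1P [u Hu] := med a b c.
have := median_in a b c; rewrite Hu !inE => /eqP -> /eqP //.
Qed.

Lemma keyB x y z b : b \in interval e x y -> b \in interval e x z ->
  d y b = d y (median e x y z) + d (median e x y z) b.
Proof.
move=> Hy Hz.
have := median_in b y z; set c := median e b y z.
rewrite !in_setI => /andP[/andP[Hby Hbz] Hyz].
have Hc : c = median e x y z.
  apply: median_uniq; rewrite !in_setI Hyz andbT.
  move: Hy Hz Hby Hbz; rewrite !inI => /eqP ? /eqP ? /eqP ? /eqP ?.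
  have := dtri x b c; have := dtri x c y; have := dtri x c z.
  move=> ? ? ?; apply/andP; split; apply/eqP; lia.
rewrite -Hc; move: Hby; rewrite inI => /eqP.
rewrite (dsym y b) (dsym y c) (dsym c b); lia.
Qed.

End Dist.
Definition two : 'I_3 := @Ordinal 3 2 isT.

Theorem lemmaI1 (T : finType) (e : rel T) (x y z : T) :
  median_graph e ->
  round_ends_with e (loc3 x y z) (fun w => w = median e x y z) (x, ag1).
Proof.
case=> esym _ conn med.
set loc := loc3 x y z; set m := median e x y z.
have dS := dsym esym conn; have iS := interval_sym esym conn.
have mA := median_in med x y z; rewrite -/m !in_setI in mA.
case/andP: mA => /andP[mxy mxz] myz.
have mpair : forall u v : 'I_3, u != v -> m \in interval e (loc u) (loc v).
  case=> [[|[|[|?]]] ?]; case=> [[|[|[|?]]] ?] //= _; first [done | by rewrite iS].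
have bargm : forall u, barg e loc m u = set0.
  move=> u; apply/setP => a; rewrite inE; apply/bigcupP => [[v vu]].
  rewrite !in_setI !in_setD1 => /andP[/andP[am Ia] /andP[_ Ib]].
  have := int_meet esym conn (mpair u v _) Ia Ib.
  by rewrite eq_sym vu => /(_ isT) /eqP; rewrite (negbTE am).
have term : forall p, round_ends_with e loc (fun w => w = m) (m, p).
  move=> p; constructor.
  - exists None; apply: step_end_acc; first exact: bargm.
    rewrite /majority; have -> : [set u | accept_end e loc m u] = setT.
      by apply/setP=> u; rewrite !inE /accept_end bargm eqxx.
    by rewrite cardsT card_ord.
  - by [].
  - move=> s' H; inversion H; subst.
    + by match goal with H : is_true (best_barg _ _ _ _ _) |- _ => move: H end;
        rewrite /best_barg bargm inE.
    + match goal with H : is_true (~~ majority _) |- _ => move: H end; rewrite /majority.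
      have -> : [set u | accept_end e loc m u] = setT.
        by apply/setP=> u; rewrite !inE /accept_end bargm eqxx.
      by rewrite cardsT card_ord.
case: (eqVneq m x) => [mx|mx]; first by rewrite -mx; exact: term.
have mbx : m \in interval e x y /\ m \in interval e x z by [].
have hbx : forall b, b \in barg e loc x ag1 ->
    [/\ b \in interval e x y, b \in interval e x z & b != x].
  move=> b /bigcupP [v vn]; rewrite !in_setI !in_setD1 /loc /=.
  move=> /andP[/andP[bx b1] /andP[_ bv]].
  move: vn bv; case: v => [[|[|[|?]]] ?] //= _ bv.
    by rewrite interval_refl // (negbTE bx) in bv.
  by split; rewrite // iS.
have mbarg : best_barg e loc x ag1 m.
  rewrite /best_barg; apply/andP; split.
    apply/bigcupP; exists two => //; rewrite !in_setI !in_setD1 mx /loc /=.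
    by rewrite (iS y) (iS z) mxy mxz.
  apply/forallP => b; apply/implyP => /hbx [Hy Hz _].
  rewrite /loc /= (keyB esym conn med Hy Hz) -/m; exact: leq_addr.
have buniq : forall a, best_barg e loc x ag1 a -> a = m.
  move=> a /andP[Ha /forallP Hf]; have [Hy Hz _] := hbx a Ha.
  have := implyP (Hf m) (andP mbarg).1.
  rewrite /loc /= (keyB esym conn med Hy Hz) -/m => H.
  move: H; rewrite -[loc3 x y z ag1]/y => H; symmetry; apply: (d0 conn); lia.
have dmx : gdist e m x != 0 by apply/eqP => /(d0 conn) /eqP; rewrite (negbTE mx).
have majx : majority (accept_alt e loc x m).
  rewrite /majority.
  have sub : [set ag1; two] \subset [set u | accept_alt e loc x m u].
    apply/subsetP => u; rewrite !inE => /orP[]/eqP->; rewrite /accept_alt /loc.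
      rewrite -[loc3 x y z ag1]/y.
      move: mxy; rewrite iS inI => /eqP; lia.
    rewrite -[loc3 x y z two]/z.
    move: mxz; rewrite iS inI => /eqP; lia.
  by apply: leq_trans (subset_leq_card sub); rewrite cards2.
constructor.
- eexists; exact: (step_alt mbarg).
- move=> H; inversion H; subst.
  match goal with H : barg _ _ _ _ = set0 |- _ => move: mbarg; rewrite /best_barg H inE end.
  done.
- move=> s' H; inversion H; subst.
  + match goal with H : is_true (best_barg _ _ _ _ _) |- _ => rewrite (buniq _ H) majx end.
    exact: term.
  + match goal with H : barg _ _ _ _ = set0 |- _ => move: mbarg; rewrite /best_barg H inE end.
    done.
Qed.
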